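(* Let $\alpha,\beta>0$, let $c(\psi)=\sqrt{\alpha\cos^2\psi+\beta\sin^2\psi}$, let $p\ge 0$ be an integer, and let $X_{\Delta x}^p(\Omega)$ be the discontinuous piecewise polynomial space on the periodic mesh described in the context. Suppose $R,S,\psi:[0,T]\to X_{\Delta x}^p(\Omega)$ are differentiable in time and, for every $t\in[0,T]$, satisfy (with $c=c(\psi(x,t))$ inside the integrals, $x$-derivatives taken cellwise, and all sums over $j=1,\dots,N$) $$\sum_j\int_{\Omega_j}R_t\phi\,dx+\sum_j\int_{\Omega_j}cR\phi_x\,dx-\sum_j\overline{c}_{j+1/2}\overline{R}_{j+1/2}\phi^-_{j+1/2}+\sum_j\overline{c}_{j-1/2}\overline{R}_{j-1/2}\phi^+_{j-1/2}=\mathcal{B}(\phi)$$ for all $\phi\in X_{\Delta x}^p(\Omega)$, $$\sum_j\int_{\Omega_j}S_t\eta\,dx-\sum_j\int_{\Omega_j}cS\eta_x\,dx+\sum_j\overline{c}_{j+1/2}\overline{S}_{j+1/2}\eta^-_{j+1/2}-\sum_j\overline{c}_{j-1/2}\overline{S}_{j-1/2}\eta^+_{j-1/2}=\mathcal{B}(\eta)$$ for all $\eta\in X_{\Delta x}^p(\Omega)$, and $\sum_j\int_{\Omega_j}\psi_t\zeta\,dx=\sum_j\int_{\Omega_j}\frac{R+S}{2}\zeta\,dx$ for all $\zeta\in X_{\Delta x}^p(\Omega)$, where for a test function $\chi$ $$\mathcal{B}(\chi)=\tfrac12\sum_j\int_{\Omega_j}c(R\chi)_x\,dx-\tfrac12\sum_j\overline{c}_{j+1/2}R^-_{j+1/2}\chi^-_{j+1/2}+\tfrac12\sum_j\overline{c}_{j-1/2}R^+_{j-1/2}\chi^+_{j-1/2}-\tfrac12\sum_j\int_{\Omega_j}c(S\chi)_x\,dx+\tfrac12\sum_j\overline{c}_{j+1/2}S^-_{j+1/2}\chi^-_{j+1/2}-\tfrac12\sum_j\overline{c}_{j-1/2}S^+_{j-1/2}\chi^+_{j-1/2}.$$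 Then $$\frac{d}{dt}\left(\sum_{j=1}^N\int_{\Omega_j}\frac{R^2+S^2}{2}\,dx\right)=0.$$
   Context: The domain $\Omega$ is partitioned into cells $\Omega_j=[x_{j-1/2},x_{j+1/2}]$, $j=1,\dots,N$, with $\Delta x_j=x_{j+1/2}-x_{j-1/2}$. $X_{\Delta x}^p(\Omega)=\{u\in L^2(\Omega): u|_{\Omega_j}$ is a polynomial of degree $\le p$ for each $j\}$. For a grid function $u$, $u^+_{j+1/2}$ and $u^-_{j+1/2}$ denote its traces at $x_{j+1/2}$ from the right and left respectively; $\overline{u}_{j+1/2}=(u^+_{j+1/2}+u^-_{j+1/2})/2$ and $\llbracket u\rrbracket_{j+1/2}=u^+_{j+1/2}-u^-_{j+1/2}$. Also $c^\pm_{j+1/2}=c(\psi^\pm_{j+1/2})$ and $\overline{c}_{j+1/2}=(c^+_{j+1/2}+c^-_{j+1/2})/2$. Periodic boundary conditions: the endpoints $x_{1/2}$ and $x_{N+1/2}$ are identified, i.e. $u^-_{1/2}:=u^-_{N+1/2}$ (trace from cell $N$) and $u^+_{N+1/2}:=u^+_{1/2}$ (trace from cell $1$), for all grid functions including $\psi$ and the test functions. *)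

(* Defs.v *)
From Stdlib Require Import Reals Arith.
From Coquelicot Require Import Coquelicot.
Open Scope R_scope.

(* ---- Mesh conventions ----------------------------------------------------
   Nodes: xn i = x_{i+1/2}, i = 0..N.
   An element u of X^p_{Dx}(Omega) is represented by its cellwise monomial
   coefficients: u j k = coefficient of x^k of the polynomial u|_{Omega_j}
   (only j = 1..N and k = 0..p matter).  Every element of X^p has such a
   representation and every such family is an element of X^p. *)

Definition pev (p : nat) (a : nat -> R) (x : R) : R :=
  sum_f_R0 (fun k => a k * x ^ k) p.

Definition cellf (p : nat) (u : nat -> nat -> R) (j : nat) : R -> R :=
  pev p (u j).

Fixpoint sum1 (n : nat) (f : nat -> R) : R :=
  match n with
  | O => 0
  | S m => sum1 m f + f (S m)
  end.

Definition cellint (xn : nat -> R) (j : nat) (g : R -> R) : R :=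
  RInt g (xn (j - 1)%nat) (xn j).

(* traces at node x_{i+1/2}, i = 0..N, with periodic identification *)
Definition trm (N p : nat) (xn : nat -> R) (u : nat -> nat -> R) (i : nat) : R :=
  if Nat.eqb i 0 then cellf p u N (xn N) else cellf p u i (xn i).
Definition trp (N p : nat) (xn : nat -> R) (u : nat -> nat -> R) (i : nat) : R :=
  if Nat.eqb i N then cellf p u 1 (xn O) else cellf p u (S i) (xn i).
Definition avg (N p : nat) (xn : nat -> R) (u : nat -> nat -> R) (i : nat) : R :=
  (trp N p xn u i + trm N p xn u i) / 2.

Definition cw (alpha beta : R) (psi : R) : R :=
  sqrt (alpha * (cos psi) ^ 2 + beta * (sin psi) ^ 2).

Definition cbar (alpha beta : R) (N p : nat) (xn : nat -> R)
  (psi : nat -> nat -> R) (i : nat) : R :=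
  (cw alpha beta (trp N p xn psi i) + cw alpha beta (trm N p xn psi i)) / 2.

Definition Bform (alpha beta : R) (N p : nat) (xn : nat -> R)
  (Rv Sv Pv chi : nat -> nat -> R) : R :=
  let c := fun j x => cw alpha beta (cellf p Pv j x) in
  let cb := cbar alpha beta N p xn Pv in
  / 2 * sum1 N (fun j => cellint xn j (fun x =>
          c j x * Derive (fun y => cellf p Rv j y * cellf p chi j y) x))
  - / 2 * sum1 N (fun j => cb j * trm N p xn Rv j * trm N p xn chi j)
  + / 2 * sum1 N (fun j => cb (j - 1)%nat * trp N p xn Rv (j - 1)%nat
                                          * trp N p xn chi (j - 1)%nat)
  - / 2 * sum1 N (fun j => cellint xn j (fun x =>
          c j x * Derive (fun y => cellf p Sv j y * cellf p chi j y) x))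
  + / 2 * sum1 N (fun j => cb j * trm N p xn Sv j * trm N p xn chi j)
  - / 2 * sum1 N (fun j => cb (j - 1)%nat * trp N p xn Sv (j - 1)%nat
                                          * trp N p xn chi (j - 1)%nat).

Definition deriv_within (a b : R) (f : R -> R) (t d : R) : Prop :=
  filterlim (fun s => (f s - f t) / (s - t))
    (within (fun s => s <> t /\ a <= s <= b) (locally t)) (locally d).

Definition energy (N p : nat) (xn : nat -> R) (Rv Sv : nat -> nat -> R) : R :=
  sum1 N (fun j => cellint xn j (fun x =>
     (cellf p Rv j x ^ 2 + cellf p Sv j x ^ 2) / 2)).

(* Main.v *)
Require Import Defs.
From Stdlib Require Import Reals Arith.
From Coquelicot Require Import Coquelicot.
From Stdlib Require Import Lra Lia Psatz.
Open Scope R_scope.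


Lemma pev_S p a x : pev (S p) a x = pev p a x + a (S p) * x ^ (S p).
Proof. reflexivity. Qed.

Lemma ex_derive_pev p a x : ex_derive (pev p a) x.
Proof.
  revert x; induction p; intro x.
  - apply (ex_derive_ext (fun y => a 0%nat * y ^ 0) (pev 0 a) x). intro; reflexivity. auto_derive; auto.
  - apply (ex_derive_ext (fun y => pev p a y + a (S p) * y ^ (S p)) (pev (S p) a) x).
    intro; reflexivity. auto_derive. apply IHp.
Qed.

Lemma cont_pev p a x : continuous (pev p a) x.
Proof. apply (@ex_derive_continuous R_AbsRing R_NormedModule), ex_derive_pev. Qed.

Lemma cont_Dpev p a x : continuous (Derive (pev p a)) x.
Proof.
  revert x; induction p; intro x.
  - apply (continuous_ext (fun _ => 0)).
    + intro y. symmetry.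
      rewrite (Derive_ext _ (fun _ => a 0%nat)). apply Derive_const.
      intro; unfold pev; simpl; ring.
    + apply continuous_const.
  - apply (continuous_ext (fun y => plus (Derive (pev p a) y) (a (S p) * (INR (S p) * y ^ p)))).
    + intro y. symmetry.
      rewrite (Derive_ext _ (fun y => pev p a y + a (S p) * y ^ (S p))) by (intro; reflexivity).
      rewrite Derive_plus. 2: apply ex_derive_pev. 2: auto_derive; auto.
      apply Rplus_eq_compat_l. apply is_derive_unique. auto_derive; auto. simpl. ring.
    + apply (@continuous_plus R_UniformSpace R_AbsRing R_NormedModule). apply IHp.
      apply (@ex_derive_continuous R_AbsRing R_NormedModule). auto_derive. auto.
Qed.

Lemma cw_pos al be y : 0 < al -> 0 < be -> 0 < al * cos y ^ 2 + be * sin y ^ 2.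
Proof.
  intros. pose proof (sin2_cos2 y). unfold Rsqr in H1.
  assert (0 <= cos y ^ 2) by (apply pow2_ge_0).
  assert (0 <= sin y ^ 2) by (apply pow2_ge_0).
  destruct (Rle_lt_dec (cos y ^2) 0).
  - assert (cos y ^ 2 = 0) by lra. nra.
  - nra.
Qed.

Lemma cont_cw al be p a x : 0 < al -> 0 < be -> continuous (fun y => cw al be (pev p a y)) x.
Proof.
  intros. apply (@ex_derive_continuous R_AbsRing R_NormedModule). unfold cw. auto_derive.
  split. apply ex_derive_pev. split. apply ex_derive_pev. split; auto.
  pose proof (cw_pos al be (pev p a x) H H0). simpl in H1. lra.
Qed.
Lemma RInt_scalR (f : R -> R) a b k : ex_RInt f a b -> RInt (fun x => k * f x) a b = k * RInt f a b.
Proof. intro H. apply (RInt_scal f a b k H). Qed.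
Lemma RInt_plusR (f g : R -> R) a b : ex_RInt f a b -> ex_RInt g a b ->
  RInt (fun x => f x + g x) a b = RInt f a b + RInt g a b.
Proof. intros H1 H2. apply (RInt_plus f g a b H1 H2). Qed.
Lemma ex_RInt_plusR (f g : R -> R) a b : ex_RInt f a b -> ex_RInt g a b ->
  ex_RInt (fun x => f x + g x) a b.
Proof. intros H1 H2. apply (ex_RInt_plus f g a b H1 H2). Qed.
Lemma ex_RInt_contR (f : R -> R) a b : (forall z, continuous f z) -> ex_RInt f a b.
Proof. intro H. apply (ex_RInt_continuous f a b). intros; apply H. Qed.

Lemma ex_RInt_mon c n a b : ex_RInt (fun x => c * x ^ n) a b.
Proof. apply ex_RInt_contR. intro z. apply (@ex_derive_continuous R_AbsRing R_NormedModule). auto_derive. auto. Qed.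

Lemma ex_RInt_sum (f : nat -> R -> R) n a b : (forall k, ex_RInt (f k) a b) ->
  ex_RInt (fun x => sum_f_R0 (fun k => f k x) n) a b.
Proof.
  intro H; induction n.
  - simpl. apply H.
  - simpl. apply ex_RInt_plusR. apply IHn. apply H.
Qed.

Lemma RInt_sum (f : nat -> R -> R) n a b : (forall k, ex_RInt (f k) a b) ->
  RInt (fun x => sum_f_R0 (fun k => f k x) n) a b = sum_f_R0 (fun k => RInt (f k) a b) n.
Proof.
  intro H; induction n.
  - simpl. reflexivity.
  - simpl. rewrite RInt_plusR. rewrite IHn. reflexivity. apply ex_RInt_sum; auto. apply H.
Qed.

Lemma pp_expand p a b x : pev p a x * pev p b x =
  sum_f_R0 (fun k => sum_f_R0 (fun l => a k * b l * x ^ (k + l)) p) p.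
Proof.
  unfold pev. rewrite (Rmult_comm (sum_f_R0 (fun k => a k * x ^ k) p)), scal_sum. apply sum_eq. intros k _.
  rewrite scal_sum. apply sum_eq. intros l _. rewrite pow_add. ring.
Qed.

Definition Jb p (a b : nat -> R) u v :=
  sum_f_R0 (fun k => sum_f_R0 (fun l => a k * b l * RInt (fun x => x ^ (k + l)) u v) p) p.

Lemma ex_RInt_pp p a b u v : ex_RInt (fun x => pev p a x * pev p b x) u v.
Proof.
  apply (ex_RInt_ext (fun x => sum_f_R0 (fun k => sum_f_R0 (fun l => a k * b l * x ^ (k + l)) p) p)).
  intros; symmetry; apply pp_expand.
  apply (ex_RInt_sum (fun k x => sum_f_R0 (fun l => a k * b l * x ^ (k + l)) p)).
  intro k. apply (ex_RInt_sum (fun l x => a k * b l * x ^ (k + l))). intro; apply ex_RInt_mon.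
Qed.

Lemma RInt_pp p a b u v : RInt (fun x => pev p a x * pev p b x) u v = Jb p a b u v.
Proof.
  rewrite (RInt_ext _ (fun x => sum_f_R0 (fun k => sum_f_R0 (fun l => a k * b l * x ^ (k + l)) p) p)).
  2: intros; apply pp_expand.
  rewrite (RInt_sum (fun k x => sum_f_R0 (fun l => a k * b l * x ^ (k + l)) p)).
  2: intro k; apply (ex_RInt_sum (fun l x => a k * b l * x ^ (k + l))); intro; apply ex_RInt_mon.
  unfold Jb. apply sum_eq. intros k _.
  rewrite (RInt_sum (fun l x => a k * b l * x ^ (k + l))). 2: intro; apply ex_RInt_mon.
  apply sum_eq. intros l _. apply RInt_scalR.
  eapply ex_RInt_ext; [|apply (ex_RInt_mon 1 (k+l))]; intros; simpl; ring.
Qed.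
Lemma filterlim_multR (x y : R) :
  filterlim (fun z : R * R => fst z * snd z) (filter_prod (locally x) (locally y)) (locally (x * y)).
Proof. apply (@filterlim_scal R_AbsRing R_NormedModule). Qed.

Lemma filterlim_plusR (x y : R) :
  filterlim (fun z : R * R => fst z + snd z) (filter_prod (locally x) (locally y)) (locally (x + y)).
Proof. apply (@filterlim_plus R_AbsRing R_NormedModule). Qed.

Section DW.
Variables (a b t : R).
Let F := within (fun s => s <> t /\ a <= s <= b) (locally t).

Lemma lim_id : filterlim (fun s => s) F (locally t).
Proof. intros P HP. unfold filtermap, F, within. eapply filter_imp; [|exact HP]. auto. Qed.

Lemma dw_ext (f g : R -> R) d : (forall s, f s = g s) -> deriv_within a b f t d -> deriv_within a b g t d.
Proof.
  unfold deriv_within; intros H1 H2. eapply filterlim_ext; [|exact H2].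
  intro s; simpl. rewrite !H1. reflexivity.
Qed.

Lemma dw_val (f : R -> R) d d' : d = d' -> deriv_within a b f t d -> deriv_within a b f t d'.
Proof. intros ->; auto. Qed.

Lemma dw_const c : deriv_within a b (fun _ => c) t 0.
Proof.
  unfold deriv_within. eapply filterlim_ext; [|apply filterlim_const].
  intro s; simpl. unfold Rdiv. ring.
Qed.

Lemma dw_plus f g df dg : deriv_within a b f t df -> deriv_within a b g t dg ->
  deriv_within a b (fun s => f s + g s) t (df + dg).
Proof.
  unfold deriv_within; intros Hf Hg.
  eapply filterlim_ext; [|apply (filterlim_comp_2 _ _ Rplus Hf Hg (filterlim_plusR df dg))].
  intro s; simpl. unfold Rdiv. ring.
Qed.

Lemma dw_cont f df : deriv_within a b f t df -> filterlim f F (locally (f t)).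
Proof.
  unfold deriv_within; intro Hf.
  assert (H1 : filterlim (fun s => s + - t) F (locally (t + - t))).
  { apply (filterlim_comp_2 _ _ Rplus lim_id (filterlim_const (- t)) (filterlim_plusR t (-t))). }
  replace (t + - t) with 0 in H1 by ring.
  assert (H2 := filterlim_comp_2 _ _ Rmult H1 Hf (filterlim_multR 0 df)).
  assert (H3 := filterlim_comp_2 _ _ Rplus (filterlim_const (f t)) H2 (filterlim_plusR (f t) (0 * df))).
  replace (f t + 0 * df) with (f t) in H3 by ring.
  eapply filterlim_ext_loc; [|exact H3].
  unfold F, within. apply filter_forall. intros s [Hs _]. simpl.
  field. intro E; apply Hs; lra.
Qed.

Lemma dw_mult f g df dg : deriv_within a b f t df -> deriv_within a b g t dg ->
  deriv_within a b (fun s => f s * g s) t (df * g t + f t * dg).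
Proof.
  intros Hf Hg. pose proof (dw_cont f df Hf) as Cf.
  unfold deriv_within in *.
  assert (H1 := filterlim_comp_2 _ _ Rmult Cf Hg (filterlim_multR (f t) dg)).
  assert (H2 := filterlim_comp_2 _ _ Rmult (filterlim_const (g t)) Hf (filterlim_multR (g t) df)).
  assert (H3 := filterlim_comp_2 _ _ Rplus H1 H2 (filterlim_plusR _ _)).
  replace (df * g t + f t * dg) with (f t * dg + g t * df) by ring.
  eapply filterlim_ext; [|exact H3].
  intro s; simpl. unfold Rdiv. ring.
Qed.

Lemma dw_scal k f df : deriv_within a b f t df -> deriv_within a b (fun s => k * f s) t (k * df).
Proof.
  intro H. eapply dw_val; [|apply (dw_mult (fun _ => k) f 0 df (dw_const k) H)]. ring.
Qed.

Lemma dw_sumf (f : nat -> R -> R) (d : nat -> R) n :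
  (forall k, (k <= n)%nat -> deriv_within a b (f k) t (d k)) ->
  deriv_within a b (fun s => sum_f_R0 (fun k => f k s) n) t (sum_f_R0 d n).
Proof.
  induction n; intro H.
  - simpl. apply H. lia.
  - simpl. apply (dw_plus (fun s => sum_f_R0 (fun k => f k s) n) (f (S n))).
    apply IHn. intros; apply H; lia. apply H; lia.
Qed.

Lemma dw_sum1 (f : nat -> R -> R) (d : nat -> R) n :
  (forall j, (1 <= j <= n)%nat -> deriv_within a b (f j) t (d j)) ->
  deriv_within a b (fun s => sum1 n (fun j => f j s)) t (sum1 n d).
Proof.
  induction n; intro H.
  - simpl. apply dw_const.
  - simpl. apply (dw_plus (fun s => sum1 n (fun j => f j s)) (f (S n))).
    apply IHn. intros; apply H; lia. apply H; lia.
Qed.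
End DW.
Lemma sum1_ext n f g : (forall j, f j = g j) -> sum1 n f = sum1 n g.
Proof. intro H; induction n; simpl; [reflexivity| rewrite IHn, H; reflexivity]. Qed.
Lemma sum1_plus n f g : sum1 n (fun j => f j + g j) = sum1 n f + sum1 n g.
Proof. induction n; simpl; [ring| rewrite IHn; ring]. Qed.
Lemma sum1_scal n k f : k * sum1 n f = sum1 n (fun j => k * f j).
Proof. induction n; simpl; [ring| rewrite <- IHn; ring]. Qed.

Lemma Jb_sym p a b u v : Jb p a b u v = Jb p b a u v.
Proof.
  rewrite <- !RInt_pp. apply RInt_ext. intros; apply Rmult_comm.
Qed.

Lemma dw_Jb (lo hi t : R) p (A : R -> nat -> R) (dA : nat -> R) u v :
  (forall k, (k <= p)%nat -> deriv_within lo hi (fun s => A s k) t (dA k)) ->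
  deriv_within lo hi (fun s => Jb p (A s) (A s) u v) t (Jb p dA (A t) u v + Jb p (A t) dA u v).
Proof.
  intro H. unfold Jb.
  eapply dw_val; [|apply (dw_sumf lo hi t (fun k s => sum_f_R0 (fun l => A s k * A s l * RInt (fun x => x ^ (k + l)) u v) p)
     (fun k => sum_f_R0 (fun l => (dA k * A t l + A t k * dA l) * RInt (fun x => x ^ (k + l)) u v) p))].
  - rewrite <- sum_plus. apply sum_eq. intros k _. rewrite <- sum_plus. apply sum_eq. intros l _. ring.
  - intros k Hk. apply dw_sumf. intros l Hl.
    apply (dw_ext lo hi t (fun s => RInt (fun x => x ^ (k + l)) u v * (A s k * A s l))).
    intro; ring.
    eapply dw_val; [|apply dw_scal, dw_mult; apply H; auto]. cbv beta; ring.
Qed.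

Lemma energy_Jb N p xn (U V : nat -> nat -> R) : energy N p xn U V =
  sum1 N (fun j => / 2 * Jb p (U j) (U j) (xn (j - 1)%nat) (xn j) + / 2 * Jb p (V j) (V j) (xn (j - 1)%nat) (xn j)).
Proof.
  unfold energy. apply sum1_ext. intro j. unfold cellint, cellf.
  rewrite (RInt_ext _ (fun x => / 2 * (pev p (U j) x * pev p (U j) x) + / 2 * (pev p (V j) x * pev p (V j) x))).
  2: intros; change ((pev p (U j) x ^ 2 + pev p (V j) x ^ 2) / 2 = / 2 * (pev p (U j) x * pev p (U j) x) + / 2 * (pev p (V j) x * pev p (V j) x)); field.
  rewrite RInt_plusR.
  - rewrite (RInt_scalR (fun x => pev p (U j) x * pev p (U j) x)) by apply ex_RInt_pp.
    rewrite (RInt_scalR (fun x => pev p (V j) x * pev p (V j) x)) by apply ex_RInt_pp.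
    rewrite !RInt_pp. reflexivity.
  - apply (ex_RInt_scal (fun x => pev p (U j) x * pev p (U j) x)), ex_RInt_pp.
  - apply (ex_RInt_scal (fun x => pev p (V j) x * pev p (V j) x)), ex_RInt_pp.
Qed.

Lemma dw_energy (lo hi t : R) N p xn (Rc Sc : R -> nat -> nat -> R) (Rd Sd : nat -> nat -> R) :
  (forall j k, (1 <= j <= N)%nat -> (k <= p)%nat ->
      deriv_within lo hi (fun s => Rc s j k) t (Rd j k) /\
      deriv_within lo hi (fun s => Sc s j k) t (Sd j k)) ->
  deriv_within lo hi (fun s => energy N p xn (Rc s) (Sc s)) t
    (sum1 N (fun j => cellint xn j (fun x => cellf p Rd j x * cellf p (Rc t) j x))
     + sum1 N (fun j => cellint xn j (fun x => cellf p Sd j x * cellf p (Sc t) j x))).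
Proof.
  intro H.
  eapply dw_ext; [intro s; symmetry; apply energy_Jb|].
  rewrite <- sum1_plus.
  eapply dw_val; [|apply (dw_sum1 lo hi t (fun j s => / 2 * Jb p (Rc s j) (Rc s j) (xn (j - 1)%nat) (xn j) + / 2 * Jb p (Sc s j) (Sc s j) (xn (j - 1)%nat) (xn j)))].
  2: { intros j Hj. apply dw_plus; apply dw_scal; apply dw_Jb; intros k Hk; apply (H j k Hj Hk). }
  apply sum1_ext. intro j. unfold cellint, cellf. rewrite !RInt_pp.
  rewrite (Jb_sym p (Rc t j)), (Jb_sym p (Sc t j)). field.
Qed.
Lemma cont_multR (f g : R -> R) x : continuous f x -> continuous g x -> continuous (fun y => f y * g y) x.
Proof. intros. apply (@continuous_mult R_UniformSpace R_AbsRing); auto. Qed.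

Lemma K_self al be n p xn (P U : nat -> nat -> R) : 0 < al -> 0 < be ->
  / 2 * sum1 n (fun j => cellint xn j (fun x => cw al be (cellf p P j x) *
        Derive (fun y => cellf p U j y * cellf p U j y) x))
  = sum1 n (fun j => cellint xn j (fun x => cw al be (cellf p P j x) * cellf p U j x
        * Derive (cellf p U j) x)).
Proof.
  intros Ha Hb. rewrite sum1_scal. apply sum1_ext. intro j. unfold cellint.
  rewrite (RInt_ext _ (fun x => 2 * (cw al be (cellf p P j x) * cellf p U j x * Derive (cellf p U j) x))).
  - rewrite RInt_scalR. field.
    apply ex_RInt_contR. intro z. apply cont_multR. apply cont_multR.
    apply (cont_cw al be p (P j) z Ha Hb). apply cont_pev. apply cont_Dpev.
  - intros x _. rewrite Derive_mult by apply ex_derive_pev.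
    change (cw al be (cellf p P j x) * (Derive (cellf p U j) x * cellf p U j x + cellf p U j x * Derive (cellf p U j) x) =
      2 * (cw al be (cellf p P j x) * cellf p U j x * Derive (cellf p U j) x)). ring.
Qed.

Lemma K_cross al be n p xn (P U V : nat -> nat -> R) :
  sum1 n (fun j => cellint xn j (fun x => cw al be (cellf p P j x) *
        Derive (fun y => cellf p V j y * cellf p U j y) x))
  = sum1 n (fun j => cellint xn j (fun x => cw al be (cellf p P j x) *
        Derive (fun y => cellf p U j y * cellf p V j y) x)).
Proof.
  apply sum1_ext. intro j. unfold cellint. apply RInt_ext. intros x _.
  f_equal. apply Derive_ext. intro; apply Rmult_comm.
Qed.

Lemma telesc n (X : nat -> R) : sum1 n (fun j => X j - X (j - 1)%nat) = X n - X 0%nat.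
Proof.
  induction n; simpl; [ring|]. rewrite IHn. replace (n - 0)%nat with n by lia. ring.
Qed.

Lemma flux0 al be N p xn (P U V : nat -> nat -> R) : (1 <= N)%nat ->
  let cb := cbar al be N p xn P in
  sum1 N (fun j => cb j * avg N p xn U j * trm N p xn U j)
  - sum1 N (fun j => cb (j - 1)%nat * avg N p xn U (j - 1)%nat * trp N p xn U (j - 1)%nat)
  - / 2 * sum1 N (fun j => cb j * trm N p xn U j * trm N p xn U j)
  + / 2 * sum1 N (fun j => cb (j - 1)%nat * trp N p xn U (j - 1)%nat * trp N p xn U (j - 1)%nat)
  + / 2 * sum1 N (fun j => cb j * trm N p xn V j * trm N p xn U j)
  - / 2 * sum1 N (fun j => cb (j - 1)%nat * trp N p xn V (j - 1)%nat * trp N p xn U (j - 1)%nat)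
  - sum1 N (fun j => cb j * avg N p xn V j * trm N p xn V j)
  + sum1 N (fun j => cb (j - 1)%nat * avg N p xn V (j - 1)%nat * trp N p xn V (j - 1)%nat)
  - / 2 * sum1 N (fun j => cb j * trm N p xn U j * trm N p xn V j)
  + / 2 * sum1 N (fun j => cb (j - 1)%nat * trp N p xn U (j - 1)%nat * trp N p xn V (j - 1)%nat)
  + / 2 * sum1 N (fun j => cb j * trm N p xn V j * trm N p xn V j)
  - / 2 * sum1 N (fun j => cb (j - 1)%nat * trp N p xn V (j - 1)%nat * trp N p xn V (j - 1)%nat)
  = 0.
Proof.
  intros HN cb.
  set (X := fun i => cb i * (trm N p xn U i * trp N p xn U i - trm N p xn V i * trp N p xn V i) / 2).
  assert (Hgen : forall n,
  sum1 n (fun j => cb j * avg N p xn U j * trm N p xn U j)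
  - sum1 n (fun j => cb (j - 1)%nat * avg N p xn U (j - 1)%nat * trp N p xn U (j - 1)%nat)
  - / 2 * sum1 n (fun j => cb j * trm N p xn U j * trm N p xn U j)
  + / 2 * sum1 n (fun j => cb (j - 1)%nat * trp N p xn U (j - 1)%nat * trp N p xn U (j - 1)%nat)
  + / 2 * sum1 n (fun j => cb j * trm N p xn V j * trm N p xn U j)
  - / 2 * sum1 n (fun j => cb (j - 1)%nat * trp N p xn V (j - 1)%nat * trp N p xn U (j - 1)%nat)
  - sum1 n (fun j => cb j * avg N p xn V j * trm N p xn V j)
  + sum1 n (fun j => cb (j - 1)%nat * avg N p xn V (j - 1)%nat * trp N p xn V (j - 1)%nat)
  - / 2 * sum1 n (fun j => cb j * trm N p xn U j * trm N p xn V j)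
  + / 2 * sum1 n (fun j => cb (j - 1)%nat * trp N p xn U (j - 1)%nat * trp N p xn V (j - 1)%nat)
  + / 2 * sum1 n (fun j => cb j * trm N p xn V j * trm N p xn V j)
  - / 2 * sum1 n (fun j => cb (j - 1)%nat * trp N p xn V (j - 1)%nat * trp N p xn V (j - 1)%nat)
  = sum1 n (fun j => X j - X (j - 1)%nat)).
  { induction n.
    - cbn [sum1]. ring.
    - cbn [sum1]. rewrite <- IHn. unfold X, avg. field. }
  rewrite Hgen, telesc. unfold X, cb, cbar.
  assert (E1 : forall u, trm N p xn u N = trm N p xn u 0%nat).
  { intro u. unfold trm. destruct N; [lia|]. reflexivity. }
  assert (E2 : forall u, trp N p xn u N = trp N p xn u 0%nat).
  { intro u. unfold trp. rewrite Nat.eqb_refl. destruct N; [lia|]. reflexivity. }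
  rewrite !E1, !E2. ring.
Qed.


Theorem proposition2p1
  (alpha beta : R) (N p : nat) (xn : nat -> R) (T : R)
  (Rc Sc Pc Rd Sd Pd : R -> nat -> nat -> R) :
  0 < alpha -> 0 < beta ->
  (1 <= N)%nat ->
  (forall i : nat, (i < N)%nat -> xn i < xn (S i)) ->
  (* R, S, psi differentiable in time on [0,T], with derivatives Rd, Sd, Pd *)
  (forall t, 0 <= t <= T -> forall j k, (1 <= j <= N)%nat -> (k <= p)%nat ->
      deriv_within 0 T (fun s => Rc s j k) t (Rd t j k) /\
      deriv_within 0 T (fun s => Sc s j k) t (Sd t j k) /\
      deriv_within 0 T (fun s => Pc s j k) t (Pd t j k)) ->
  (* equation for R *)
  (forall t, 0 <= t <= T -> forall phi : nat -> nat -> R,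
      sum1 N (fun j => cellint xn j (fun x => cellf p (Rd t) j x * cellf p phi j x))
      + sum1 N (fun j => cellint xn j (fun x =>
            cw alpha beta (cellf p (Pc t) j x) * cellf p (Rc t) j x
              * Derive (cellf p phi j) x))
      - sum1 N (fun j => cbar alpha beta N p xn (Pc t) j * avg N p xn (Rc t) j
                           * trm N p xn phi j)
      + sum1 N (fun j => cbar alpha beta N p xn (Pc t) (j - 1)%nat
                           * avg N p xn (Rc t) (j - 1)%nat
                           * trp N p xn phi (j - 1)%nat)
      = Bform alpha beta N p xn (Rc t) (Sc t) (Pc t) phi) ->
  (* equation for S *)
  (forall t, 0 <= t <= T -> forall eta : nat -> nat -> R,
      sum1 N (fun j => cellint xn j (fun x => cellf p (Sd t) j x * cellf p eta j x))
      - sum1 N (fun j => cellint xn j (fun x =>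
            cw alpha beta (cellf p (Pc t) j x) * cellf p (Sc t) j x
              * Derive (cellf p eta j) x))
      + sum1 N (fun j => cbar alpha beta N p xn (Pc t) j * avg N p xn (Sc t) j
                           * trm N p xn eta j)
      - sum1 N (fun j => cbar alpha beta N p xn (Pc t) (j - 1)%nat
                           * avg N p xn (Sc t) (j - 1)%nat
                           * trp N p xn eta (j - 1)%nat)
      = Bform alpha beta N p xn (Rc t) (Sc t) (Pc t) eta) ->
  (* equation for psi *)
  (forall t, 0 <= t <= T -> forall zeta : nat -> nat -> R,
      sum1 N (fun j => cellint xn j (fun x => cellf p (Pd t) j x * cellf p zeta j x))
      = sum1 N (fun j => cellint xn j (fun x =>
            (cellf p (Rc t) j x + cellf p (Sc t) j x) / 2 * cellf p zeta j x))) ->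
  forall t, 0 <= t <= T ->
    deriv_within 0 T (fun s => energy N p xn (Rc s) (Sc s)) t 0.
Proof.
  intros Ha Hb HN Hx Hd HR HS HP t Ht.
  eapply dw_val; [|apply (dw_energy 0 T t N p xn Rc Sc (Rd t) (Sd t))].
  2: { intros j k Hj Hk. destruct (Hd t Ht j k Hj Hk) as [H1 [H2 _]]. split; auto. }
  specialize (HR t Ht (Rc t)). specialize (HS t Ht (Sc t)).
  unfold Bform in HR, HS. cbv beta zeta in HR, HS.
  pose proof (K_self alpha beta N p xn (Pc t) (Rc t) Ha Hb) as K1.
  pose proof (K_self alpha beta N p xn (Pc t) (Sc t) Ha Hb) as K4.
  pose proof (K_cross alpha beta N p xn (Pc t) (Rc t) (Sc t)) as K23.
  pose proof (flux0 alpha beta N p xn (Pc t) (Rc t) (Sc t) HN) as F. cbv zeta in F.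
  lra.
Qed.
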